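(* The following conditions are equivalent. (i) The sequence $N$ is a semi-free DG $B$-module; (ii) The sequence $N$ is a DG $B$-module; and (iii) For all integers $i$ and $j$ we have $\xi_i=-\alpha_i$, $\tau_i=t$, $\alpha_{i-1}\alpha_i=-t\delta_i$, $\delta_i\alpha_{i+1}=\alpha_{i-1}\delta_{i+1}$, $\delta_{i+j}(\gamma_{i,s} m_j)=\gamma_{i,s} \delta_j(m_j)$, $\alpha_{i+j}(\gamma_{i,s} m_j)=\partial_i^A(\gamma_{i,s})m_j+(-1)^i\gamma_{i,s}\alpha_j(m_j)$ for $s=1,\ldots,r_i$ and for all $m_j\in M_j$. In particular, if $N$ is a DG $B$-module, then $\partial_i^N=\begin{bmatrix}-\alpha_{i-1} & \delta_i \\ t & \alpha_i\end{bmatrix}$.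
   Context: Let $R$ be a commutative noetherian ring. Let $A$ be a (commutative, positively graded) DG $R$-algebra such that each $A_i$ is free over $R$ of finite rank, with fixed basis $\{\gamma_{i,1},\ldots,\gamma_{i,r_i}\}$ of $A_i$. Let $t\in R$, let $K=K^R(t)$ be the Koszul complex $0\to K_1\xrightarrow{t}K_0\to 0$ with bases $1\in K_0$, $e\in K_1$, and let $B=K^R(t)\otimes_R A$. Identify $B_i=(K_1\otimes_R A_{i-1})\oplus(K_0\otimes_R A_i)$ with $A_{i-1}\oplus A_i$, writing $e\otimes a_{i-1}+1\otimes a_i$ as the column vector $\left[\begin{smallmatrix}a_{i-1}\\ a_i\end{smallmatrix}\right]$; then $\partial^B_i=\left[\begin{smallmatrix}-\partial^A_{i-1} & 0\\ t & \partial^A_i\end{smallmatrix}\right]$ and the product is $\left[\begin{smallmatrix}a_{i-1}\\ a_i\end{smallmatrix}\right]\left[\begin{smallmatrix}c_{j-1}\\ c_j\end{smallmatrix}\right]=\left[\begin{smallmatrix}a_{i-1}c_j+(-1)^ia_ic_{j-1}\\ a_ic_j\end{smallmatrix}\right]$. Let $\{\beta_i\}_{i\in\mathbb Z}$ be cardinal numbers with $\beta_i=0$ for $i\ll0$, and set $M_i=\bigoplus_{j\ge0}A_j^{(\beta_{i-j})}$ (direct sums of copies of $A_j$ indexed by $\beta_{i-j}$), with scalar multiplication by $A$ componentwise. Let $\xi_i\colon M_i\to M_{i-1}$, $\tau_i\colon M_i\to M_i$, $\delta_i\colon M_i\to M_{i-2}$, $\alpha_i\colon M_i\to M_{i-1}$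 be $R$-module homomorphisms, set $N_i=M_{i-1}\oplus M_i$ and $\partial^N_i=\left[\begin{smallmatrix}\xi_{i-1}&\delta_i\\ \tau_{i-1}&\alpha_i\end{smallmatrix}\right]\colon N_i\to N_{i-1}$, and let $N$ be the sequence $\cdots\to N_i\xrightarrow{\partial^N_i}N_{i-1}\to\cdots$ (not assumed to be a complex), with $B$ acting by $\left[\begin{smallmatrix}a_{i-1}\\ a_i\end{smallmatrix}\right]\left[\begin{smallmatrix}m_{j-1}\\ m_j\end{smallmatrix}\right]=\left[\begin{smallmatrix}a_{i-1}m_j+(-1)^ia_im_{j-1}\\ a_im_j\end{smallmatrix}\right]$. *)

(* Defs.v *)
From HB Require Import structures.
From mathcomp Require Import all_boot all_order all_algebra.
From mathcomp Require Import boolp.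
From Stdlib Require List.
Set Implicit Arguments. Unset Strict Implicit. Unset Printing Implicit Defensive.
Import GRing.Theory.
Local Open Scope ring_scope.

Definition gcast (R : pzRingType) (V : int -> lmodType R) (i j : int) (e : i = j) (x : V i) : V j :=
  ecast k (V k) e x.
Arguments gcast [R] V [i j] e x.

Section DProd.
Variables (R : pzRingType) (I : Type) (V : I -> lmodType R).
Definition dprod := forall i, V i.
HB.instance Definition _ := gen_eqMixin dprod.
HB.instance Definition _ := gen_choiceMixin dprod.
Definition dprod_zero : dprod := fun i => 0.
Definition dprod_add (f g : dprod) : dprod := fun i => f i + g i.
Definition dprod_opp (f : dprod) : dprod := fun i => - f i.
Definition dprod_scale (c : R) (f : dprod) : dprod := fun i => c *: f i.
Lemma dprod_addA : associative dprod_add.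
Proof. by move=> f g h; apply: functional_extensionality_dep => i; rewrite /dprod_add addrA. Qed.
Lemma dprod_addC : commutative dprod_add.
Proof. by move=> f g; apply: functional_extensionality_dep => i; rewrite /dprod_add addrC. Qed.
Lemma dprod_add0 : left_id dprod_zero dprod_add.
Proof. by move=> f; apply: functional_extensionality_dep => i; rewrite /dprod_add add0r. Qed.
Lemma dprod_addN : left_inverse dprod_zero dprod_opp dprod_add.
Proof. by move=> f; apply: functional_extensionality_dep => i; rewrite /dprod_add addNr. Qed.
HB.instance Definition _ := GRing.isZmodule.Build dprod dprod_addA dprod_addC dprod_add0 dprod_addN.
Lemma dprod_scaleA a b f : dprod_scale a (dprod_scale b f) = dprod_scale (a * b) f.
Proof. by apply: functional_extensionality_dep => i; rewrite /dprod_scale scalerA. Qed.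
Lemma dprod_scale1 : left_id 1 dprod_scale.
Proof. by move=> f; apply: functional_extensionality_dep => i; rewrite /dprod_scale scale1r. Qed.
Lemma dprod_scaleDr : right_distributive dprod_scale dprod_add.
Proof. by move=> a f g; apply: functional_extensionality_dep => i; rewrite /dprod_scale /dprod_add scalerDr. Qed.
Lemma dprod_scaleDl f : {morph dprod_scale^~ f : a b / a + b >-> dprod_add a b}.
Proof. by move=> a b; apply: functional_extensionality_dep => i; rewrite /dprod_scale /dprod_add scalerDl. Qed.
HB.instance Definition _ := GRing.Zmodule_isLmodule.Build R dprod dprod_scaleA dprod_scale1 dprod_scaleDr dprod_scaleDl.

Definition finsupp (f : dprod) : bool :=
  `[< exists s : seq I, forall i, f i != 0 -> List.In i s >].

Lemma finsupp_closed : GRing.subsemimod_closed finsupp.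
Proof.
split; [split|].
- by apply/asboolP; exists [::] => i; rewrite eqxx.
- move=> f g /asboolP [s Hs] /asboolP [s' Hs']; apply/asboolP; exists (s ++ s') => i Hi.
  apply/List.in_or_app; have [/eqP f0|/Hs] := boolP (f i == 0); last by left.
  right; apply: Hs'; apply: contra Hi => /eqP g0.
  by rewrite /+%R /= /dprod_add f0 g0 addr0.
- move=> a f /asboolP [s Hs]; apply/asboolP; exists s => i Hi; apply: Hs.
  by apply: contra Hi => /eqP f0; rewrite /GRing.scale /= /dprod_scale f0 scaler0.
Qed.
HB.instance Definition _ := GRing.isSubmodClosed.Build R dprod finsupp finsupp_closed.

Record dsum := DSum { dsum_val : dprod; dsum_valP : finsupp dsum_val }.
HB.instance Definition _ := [isSub for dsum_val].
HB.instance Definition _ := [Choice of dsum by <:].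
HB.instance Definition _ := [SubChoice_isSubLmodule of dsum by <:].

Definition dcomp (m : dsum) (i : I) : V i := dsum_val m i.
End DProd.

Lemma eq_dl (i j : int) : (i - 1) + j = (i + j) - 1.
Proof. by rewrite addrAC. Qed.
Lemma eq_dr (i j : int) : i + (j - 1) = (i + j) - 1.
Proof. by rewrite addrA. Qed.
Lemma eq_dd (i j : int) : i + (j - 1 - 1) = (i + j) - 1 - 1.
Proof. by rewrite !addrA. Qed.
Lemma eq_sub (k j l : int) : k + (j - l) = (k + j) - l.
Proof. by rewrite addrA. Qed.
Lemma eq_subK (k l : int) : (k - l) + l = k.
Proof. by rewrite subrK. Qed.
Lemma eq_addK1 (i : int) : i + 1 - 1 = i.
Proof. by rewrite addrK. Qed.
Lemma eq_addK1' (i : int) : i + 1 - 1 - 1 = i - 1.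
Proof. by rewrite addrK. Qed.

Definition sgn (R : pzRingType) (i : int) : R := (-1) ^+ absz i.

Definition is_ideal (R : comRingType) (J : R -> Prop) :=
  [/\ J 0, (forall x y, J x -> J y -> J (x + y)) & (forall a x, J x -> J (a * x))].
Definition noetherian (R : comRingType) :=
  forall J : nat -> R -> Prop, (forall n, is_ideal (J n)) ->
    (forall n x, J n x -> J n.+1 x) ->
    exists n, forall m, (n <= m)%N -> forall x, J m x <-> J n x.

Definition is_basis (R : pzRingType) (V : lmodType R) (n : nat) (g : 'I_n -> V) :=
  (forall v, exists c : 'I_n -> R, v = \sum_(s < n) c s *: g s) /\
  (forall c : 'I_n -> R, \sum_(s < n) c s *: g s = 0 -> forall s, c s = 0).

Record cdga (R : comRingType) := CDGA {
  dga :> int -> lmodType R;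
  dga_mul : forall i j, dga i -> dga j -> dga (i + j);
  dga_one : dga 0;
  dga_d : forall i, dga i -> dga (i - 1);
  dga_pos : forall i, i < 0 -> forall a : dga i, a = 0;
  dga_d_lin : forall i (c : R) (a b : dga i), dga_d (c *: a + b) = c *: dga_d a + dga_d b;
  dga_mul_linl : forall i j (c : R) (a a' : dga i) (b : dga j),
      dga_mul (c *: a + a') b = c *: dga_mul a b + dga_mul a' b;
  dga_mul_linr : forall i j (c : R) (a : dga i) (b b' : dga j),
      dga_mul a (c *: b + b') = c *: dga_mul a b + dga_mul a b';
  dga_mulA : forall i j k (a : dga i) (b : dga j) (c : dga k),
      dga_mul (dga_mul a b) c = gcast dga (addrA i j k) (dga_mul a (dga_mul b c));
  dga_mul1 : forall i (a : dga i), gcast dga (add0r i) (dga_mul dga_one a) = a;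
  dga_mulC : forall i j (a : dga i) (b : dga j),
      dga_mul a b = sgn R (i * j) *: gcast dga (addrC j i) (dga_mul b a);
  dga_sq : forall i (a : dga i), odd (absz i) -> dga_mul a a = 0;
  dga_dd : forall i (a : dga i), dga_d (dga_d a) = 0;
  dga_leibniz : forall i j (a : dga i) (b : dga j),
      dga_d (dga_mul a b) = gcast dga (eq_dl i j) (dga_mul (dga_d a) b)
                            + sgn R i *: gcast dga (eq_dr i j) (dga_mul a (dga_d b))
}.

Section Construction.
Variables (R : comRingType) (A : cdga R).

Lemma dga_mul0r i j (b : A j) : dga_mul (0 : A i) b = 0.
Proof.
have H := @dga_mul_linl R A i j 1 0 0 b.
rewrite !scale1r (addr0 (0 : A i)) in H.
by apply/eqP; rewrite -(addrK (dga_mul (0 : A i) b) (dga_mul (0 : A i) b)) -{1}H subrr.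
Qed.
Lemma dga_mulr0 i j (a : A i) : dga_mul a (0 : A j) = 0.
Proof.
have H := @dga_mul_linr R A i j 1 a 0 0.
rewrite !scale1r (addr0 (0 : A j)) in H.
by apply/eqP; rewrite -(addrK (dga_mul a (0 : A j)) (dga_mul a (0 : A j))) -{1}H subrr.
Qed.
Lemma gcast_eq0 (V : int -> lmodType R) i j (e : i = j) (x : V i) :
  gcast V e x != 0 -> x != 0.
Proof. by case: j / e. Qed.

(* ---- B = K^R(t) (x) A, with B_i = A_{i-1} (+) A_i ---- *)
Definition Bmod (i : int) : lmodType R := (A (i - 1) * A i)%type.
Definition Bmul i j (b : Bmod i) (c : Bmod j) : Bmod (i + j) :=
  (gcast (dga A) (eq_dl i j) (dga_mul b.1 c.2) + sgn R i *: gcast (dga A) (eq_dr i j) (dga_mul b.2 c.1),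
   dga_mul b.2 c.2).
Definition Bone : Bmod 0 := (0, dga_one A).
Definition Bd (t : R) i (b : Bmod i) : Bmod (i - 1) :=
  (- dga_d b.1, t *: b.1 + dga_d b.2).

(* ---- M_i = (+)_{j >= 0} A_j^(beta_{i-j}), the cardinal beta_l being
   that of the index type X l; we index the summands by the pairs
   (l, x) with x : X l, the summand being A_{i-l} (which is 0 if l > i) ---- *)
Variable X : int -> Type.
Definition Mmod (i : int) : lmodType R :=
  dsum (fun p : {l : int & X l} => A (i - tag p)).

Definition actM_fun k j (a : A k) (m : Mmod j) : dprod (fun p : {l : int & X l} => A ((k + j) - tag p)) :=
  fun p => gcast (dga A) (eq_sub k j (tag p)) (dga_mul a (dcomp m p)).
Lemma actM_supp k j (a : A k) (m : Mmod j) : finsupp (actM_fun a m).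
Proof.
case: m => f Hf; case/asboolP: (Hf) => s Hs; apply/asboolP; exists s => p Hp; apply: Hs.
have := gcast_eq0 Hp; apply: contra => /eqP f0.
by rewrite /dcomp /= f0 dga_mulr0.
Qed.
Definition actM k j (a : A k) (m : Mmod j) : Mmod (k + j) := DSum (actM_supp a m).

Definition Nmod (i : int) : lmodType R := (Mmod (i - 1) * Mmod i)%type.
Definition Nact i j (b : Bmod i) (n : Nmod j) : Nmod (i + j) :=
  (gcast Mmod (eq_dl i j) (actM b.1 n.2) + sgn R i *: gcast Mmod (eq_dr i j) (actM b.2 n.1),
   actM b.2 n.2).
Definition Nd (xi : forall i, {linear Mmod i -> Mmod (i - 1)})
  (tau : forall i, {linear Mmod i -> Mmod i})
  (delta : forall i, {linear Mmod i -> Mmod (i - 1 - 1)})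
  (alpha : forall i, {linear Mmod i -> Mmod (i - 1)}) i (n : Nmod i) : Nmod (i - 1) :=
  (xi (i - 1) n.1 + delta i n.2, tau (i - 1) n.1 + alpha i n.2).
End Construction.

Section DGModules.
Variables (R : comRingType) (Bm : int -> lmodType R)
  (mulB : forall i j, Bm i -> Bm j -> Bm (i + j)) (oneB : Bm 0)
  (dB : forall i, Bm i -> Bm (i - 1)).
Variables (Nm : int -> lmodType R) (act : forall i j, Bm i -> Nm j -> Nm (i + j))
  (dN : forall i, Nm i -> Nm (i - 1)).

Definition is_dg_module : Prop :=
  (forall i (c : R) (x y : Nm i), dN (c *: x + y) = c *: dN x + dN y) /\
  (forall i j (c : R) (b b' : Bm i) (n : Nm j), act (c *: b + b') n = c *: act b n + act b' n) /\
  (forall i j (c : R) (b : Bm i) (n n' : Nm j), act b (c *: n + n') = c *: act b n + act b n') /\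
  (forall i j k (b : Bm i) (b' : Bm j) (n : Nm k),
      act (mulB b b') n = gcast Nm (addrA i j k) (act b (act b' n))) /\
  (forall j (n : Nm j), gcast Nm (add0r j) (act oneB n) = n) /\
  (forall i (n : Nm i), dN (dN n) = 0) /\
  (forall i j (b : Bm i) (n : Nm j),
      dN (act b n) = gcast Nm (eq_dl i j) (act (dB b) n)
                     + sgn R i *: gcast Nm (eq_dr i j) (act b (dN n))).

Definition in_span (E : int -> Type) (e : forall i, E i -> Nm i)
  (P : forall i, E i -> Prop) (k : int) (n : Nm k) : Prop :=
  exists (s : seq {i : int & E i}) (c : forall p : {i : int & E i}, Bm (k - tag p)),
    (forall p, List.In p s -> P (tag p) (tagged p)) /\
    n = \sum_(p <- s) gcast Nm (eq_subK k (tag p)) (act (c p) (e (tag p) (tagged p))).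

Definition is_graded_basis (E : int -> Type) (e : forall i, E i -> Nm i) : Prop :=
  (forall k (n : Nm k), in_span e (fun _ _ => True) n) /\
  (forall k (s : seq {i : int & E i}) (c : forall p : {i : int & E i}, Bm (k - tag p)),
     List.NoDup s ->
     \sum_(p <- s) gcast Nm (eq_subK k (tag p)) (act (c p) (e (tag p) (tagged p))) = 0 ->
     forall p, List.In p s -> c p = 0).

(* semibasis: a basis E = \bigcup_n E^n (E^n = elements of level <= n) with
   d(E^n) contained in the B-span of E^{n-1} *)
Definition is_semifree_dg_module : Prop :=
  is_dg_module /\
  exists (E : int -> Type) (e : forall i, E i -> Nm i) (lev : forall i, E i -> nat),
    is_graded_basis e /\
    forall i (x : E i), in_span e (fun j y => (lev j y < lev i x)%N) (dN (e i x)).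
End DGModules.

(* Main.v *)
Require Import Defs.
From HB Require Import structures.
From mathcomp Require Import all_boot all_order all_algebra.
From mathcomp Require Import boolp zify.
From Stdlib Require List.
Set Implicit Arguments. Unset Strict Implicit. Unset Printing Implicit Defensive.
Import GRing.Theory.
Local Open Scope ring_scope.

Section Tr.
Variables (R : pzRingType) (V : int -> lmodType R).
Definition tr i j (x : V i) : V j :=
  match i =P j with ReflectT e => gcast V e x | ReflectF _ => 0 end.
Lemma gcastE i j (e : i = j) x : gcast V e x = tr j x.
Proof. rewrite /tr; case: (i =P j) => [e'|ne]; last by case: (ne e).
by rewrite (eq_irrelevance e e'). Qed.
Lemma tr_id i (x : V i) : tr i x = x.
Proof. by rewrite -(gcastE erefl). Qed.
Lemma tr_ne i j (x : V i) : i <> j -> tr j x = 0.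
Proof. by rewrite /tr; case: (i =P j). Qed.
Lemma gcast_comp i j k (e1 : i = j) (e2 : j = k) x :
  gcast V e2 (gcast V e1 x) = gcast V (etrans e1 e2) x.
Proof. by case: k / e2; case: j / e1. Qed.
Lemma gcastD i j (e : i = j) x y : gcast V e (x + y) = gcast V e x + gcast V e y.
Proof. by case: j / e. Qed.
Lemma gcastZ i j (e : i = j) c x : gcast V e (c *: x) = c *: gcast V e x.
Proof. by case: j / e. Qed.
Lemma gcastN i j (e : i = j) x : gcast V e (- x) = - gcast V e x.
Proof. by case: j / e. Qed.
Lemma gcast0 i j (e : i = j) : gcast V e 0 = 0.
Proof. by case: j / e. Qed.
Lemma trD i j (x y : V i) : tr j (x + y) = tr j x + tr j y.
Proof. by rewrite /tr; case: (i =P j) => // e; rewrite ?gcastD ?addr0. Qed.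
Lemma trZ i j c (x : V i) : tr j (c *: x) = c *: tr j x.
Proof. by rewrite /tr; case: (i =P j) => // e; rewrite ?gcastZ ?scaler0. Qed.
Lemma trN i j (x : V i) : tr j (- x) = - tr j x.
Proof. by rewrite /tr; case: (i =P j) => // e; rewrite ?gcastN ?oppr0. Qed.
Lemma tr0 i j : tr j (0 : V i) = 0.
Proof. by rewrite /tr; case: (i =P j) => // e; rewrite ?gcast0. Qed.
End Tr.

Lemma gcast_fun (R : pzRingType) (V W : int -> lmodType R) (h : int -> int)
  (f : forall i, V i -> W (h i)) i j (e : i = j) x :
  f j (gcast V e x) = gcast W (congr1 h e) (f i x).
Proof. by case: j / e. Qed.

Lemma sgn_sub1 (R : pzRingType) (i : int) : sgn R (i - 1) = - sgn R i.
Proof.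
rewrite /sgn; case: i => [[|n]|n].
- by rewrite expr1 expr0.
- have -> : absz (n.+1%:Z - 1) = n by lia.
  by rewrite exprS mulN1r opprK.
- have -> : absz (Negz n - 1) = n.+2 by lia.
  by rewrite /= exprS mulN1r.
Qed.
Lemma sgnD1 (R : pzRingType) (i : int) : sgn R (i + 1) = - sgn R i.
Proof. by rewrite -{2}(addrK 1 i) sgn_sub1 opprK. Qed.
Lemma sgnD (R : pzRingType) (i j : int) : sgn R (i + j) = sgn R i * sgn R j.
Proof.
elim/int_rec: j => [|n IH|n IH].
- by rewrite addr0 /sgn expr0 mulr1.
- have -> : i + n.+1%:Z = (i + n) + 1 by lia.
  have -> : n.+1%:Z = n%:Z + 1 by lia.
  by rewrite !sgnD1 IH mulrN.
- have -> : i + - n.+1%:Z = (i + - n%:Z) - 1 by lia.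
  have -> : - n.+1%:Z = - n%:Z - 1 by lia.
  by rewrite !sgn_sub1 IH mulrN.
Qed.
Lemma sgn_sq (R : pzRingType) (i : int) : sgn R i * sgn R i = 1.
Proof. by rewrite /sgn -exprD -signr_odd oddD addbb. Qed.
Lemma tr_tr (R : pzRingType) (V : int -> lmodType R) i j k (x : V i) :
  i = j -> tr k (tr j x : V j) = tr k x.
Proof. by move=> e; subst; rewrite tr_id. Qed.
Lemma tr_inj (R : pzRingType) (V : int -> lmodType R) i k (x y : V i) :
  i = k -> tr k x = tr k y :> V k -> x = y.
Proof. by move=> e; subst; rewrite !tr_id. Qed.
Lemma gcast_id (R : pzRingType) (V : int -> lmodType R) i (e : i = i) (x : V i) : gcast V e x = x.
Proof. by rewrite gcastE tr_id. Qed.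

Section MM.
Variables (R : comRingType) (A : cdga R) (X : int -> Type).
Local Notation M := (Mmod A X).

Lemma M_eq i (m m' : M i) : (forall p, dcomp m p = dcomp m' p) -> m = m'.
Proof. by move=> H; apply: val_inj; apply: functional_extensionality_dep => p; exact: H. Qed.
Lemma dcompD i (m m' : M i) p : dcomp (m + m') p = dcomp m p + dcomp m' p.
Proof. by []. Qed.
Lemma dcompZ i c (m : M i) p : dcomp (c *: m) p = c *: dcomp m p.
Proof. by []. Qed.
Lemma dcomp0 i p : dcomp (0 : M i) p = 0.
Proof. by []. Qed.
Lemma dcompN i (m : M i) p : dcomp (- m) p = - dcomp m p.
Proof. by []. Qed.
Lemma dcomp_gcast i j (e : i = j) (m : M i) p :
  dcomp (gcast M e m) p = gcast A (congr1 (fun z => z - tag p) e) (dcomp m p).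
Proof. by case: j / e. Qed.
Lemma dcomp_actM k j (a : A k) (m : M j) p :
  dcomp (actM a m) p = gcast A (eq_sub k j (tag p)) (dga_mul a (dcomp m p)).
Proof. by []. Qed.
Lemma mul_gcastr k i j (e : i = j) (a : A k) (b : A i) :
  dga_mul a (gcast A e b) = gcast A (congr1 (fun z => k + z) e) (dga_mul a b).
Proof. by case: j / e. Qed.
Lemma mul_gcastl k i j (e : i = j) (a : A i) (b : A k) :
  dga_mul (gcast A e a) b = gcast A (congr1 (fun z => z + k) e) (dga_mul a b).
Proof. by case: j / e. Qed.
Lemma actM_gcastl k k' j (e : k = k') (a : A k) (m : M j) :
  actM (gcast A e a) m = gcast M (congr1 (fun z => z + j) e) (actM a m).
Proof. by case: k' / e. Qed.
Lemma actM_gcastr k j j' (e : j = j') (a : A k) (m : M j) :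
  actM a (gcast M e m) = gcast M (congr1 (fun z => k + z) e) (actM a m).
Proof. by case: j' / e. Qed.

Lemma dga_mul0r' i j (b : A j) : dga_mul (0 : A i) b = 0.
Proof. exact: dga_mul0r. Qed.

Lemma actM_linl k j c (a a' : A k) (m : M j) :
  actM (c *: a + a') m = c *: actM a m + actM a' m.
Proof.
apply: M_eq => p; rewrite dcompD dcompZ !dcomp_actM.
by rewrite dga_mul_linl gcastD gcastZ.
Qed.
Lemma actM_linr k j c (a : A k) (m m' : M j) :
  actM a (c *: m + m') = c *: actM a m + actM a m'.
Proof.
apply: M_eq => p; rewrite dcompD dcompZ !dcomp_actM dcompD dcompZ.
by rewrite dga_mul_linr gcastD gcastZ.
Qed.
Lemma actM0l k j (m : M j) : actM (0 : A k) m = 0.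
Proof. by apply: M_eq => p; rewrite dcomp_actM dga_mul0r gcast0. Qed.
Lemma actM0r k j (a : A k) : actM a (0 : M j) = 0.
Proof. by apply: M_eq => p; rewrite dcomp_actM dcomp0 dga_mulr0 gcast0. Qed.
Lemma actMDl k j (a a' : A k) (m : M j) : actM (a + a') m = actM a m + actM a' m.
Proof. by rewrite -(scale1r a) actM_linl !scale1r. Qed.
Lemma actMDr k j (a : A k) (m m' : M j) : actM a (m + m') = actM a m + actM a m'.
Proof. by rewrite -(scale1r m) actM_linr !scale1r. Qed.
Lemma actMZl k j c (a : A k) (m : M j) : actM (c *: a) m = c *: actM a m.
Proof. by rewrite -(addr0 (c *: a)) actM_linl actM0l addr0. Qed.
Lemma actMZr k j c (a : A k) (m : M j) : actM a (c *: m) = c *: actM a m.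
Proof. by rewrite -(addr0 (c *: m)) actM_linr actM0r addr0. Qed.
Lemma actMNl k j (a : A k) (m : M j) : actM (- a) m = - actM a m.
Proof. by rewrite -scaleN1r actMZl scaleN1r. Qed.
Lemma actMNr k j (a : A k) (m : M j) : actM a (- m) = - actM a m.
Proof. by rewrite -scaleN1r actMZr scaleN1r. Qed.

Lemma actM_assoc k1 k2 j (a : A k1) (b : A k2) (m : M j) :
  actM (dga_mul a b) m = gcast M (addrA k1 k2 j) (actM a (actM b m)).
Proof.
apply: M_eq => p; rewrite dcomp_gcast !dcomp_actM dga_mulA mul_gcastr.
by rewrite !gcast_comp !gcastE.
Qed.
Lemma actM_one j (m : M j) : gcast M (add0r j) (actM (dga_one A) m) = m.
Proof.
apply: M_eq => p; rewrite dcomp_gcast dcomp_actM gcast_comp.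
by rewrite -{2}(dga_mul1 (dcomp m p)) !gcastE.
Qed.
Lemma dga_dD i (a b : A i) : dga_d (a + b) = dga_d a + dga_d b.
Proof. by rewrite -(scale1r a) dga_d_lin !scale1r. Qed.
Lemma dga_d0 i : dga_d (0 : A i) = 0.
Proof.
have H := dga_dD (0 : A i) 0; rewrite addr0 in H.
by apply: (@addrI _ (dga_d (0 : A i))); rewrite -H addr0.
Qed.
Lemma dga_dZ i c (a : A i) : dga_d (c *: a) = c *: dga_d a.
Proof. by rewrite -(addr0 (c *: a)) dga_d_lin dga_d0 addr0. Qed.
Lemma dga_dN i (a : A i) : dga_d (- a) = - dga_d a.
Proof. by rewrite -scaleN1r dga_dZ scaleN1r. Qed.
Lemma dga_d_gcast i j (e : i = j) (a : A i) :
  dga_d (gcast A e a) = gcast A (congr1 (fun z => z - 1) e) (dga_d a).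
Proof. by case: j / e. Qed.
Lemma dga_d_one : dga_d (dga_one A) = 0.
Proof. by apply: dga_pos. Qed.
Lemma actM_one' j (m : M j) : actM (dga_one A) m = gcast M (esym (add0r j)) m.
Proof. by rewrite -{2}(actM_one m) gcast_comp gcast_id. Qed.
End MM.

Section NN.
Variables (R : comRingType) (A : cdga R) (X : int -> Type).
Local Notation M := (Mmod A X).
Local Notation N := (Nmod A X).
Local Notation B := (Bmod A).

Lemma gcastNm i j (e : i = j) (n : N i) :
  gcast N e n = (gcast M (congr1 (fun z => z - 1) e) n.1, gcast M e n.2).
Proof. by case: j / e; case: n. Qed.
Lemma gcastBm i j (e : i = j) (b : B i) :
  gcast B e b = (gcast A (congr1 (fun z => z - 1) e) b.1, gcast A e b.2).
Proof. by case: j / e; case: b. Qed.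

Lemma pairZ (U V : lmodType R) c (x : U) (y : V) :
  c *: ((x, y) : (U * V)%type) = (c *: x, c *: y).
Proof. by []. Qed.
Lemma pairD (U V : lmodType R) (x x' : U) (y y' : V) :
  ((x, y) : (U * V)%type) + (x', y') = (x + x', y + y').
Proof. by []. Qed.
Lemma pairN (U V : lmodType R) (x : U) (y : V) :
  - ((x, y) : (U * V)%type) = (- x, - y).
Proof. by []. Qed.
Lemma pair0 (U V : lmodType R) : (0 : (U * V)%type) = (0, 0).
Proof. by []. Qed.

Ltac gnorm4 := rewrite ?(gcastD, gcastZ, gcastN, gcast0, actM_gcastl, actM_gcastr,
   actMDl, actMDr, actMZl, actMZr, actMNl, actMNr, actM0l, actM0r, gcast_comp).

Lemma Nact_linl i j c (b b' : B i) (n : N j) :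
  Nact (c *: b + b') n = c *: Nact b n + Nact b' n.
Proof.
case: b b' n => [b1 b2] [b1' b2'] [n1 n2]; rewrite /Nact /= pairZ pairD.
congr (_, _); last by rewrite actM_linl.
rewrite !actM_linl !gcastD !gcastZ !scalerDr !scalerA (mulrC c) -!scalerA.
by rewrite addrACA.
Qed.
Lemma Nact_linr i j c (b : B i) (n n' : N j) :
  Nact b (c *: n + n') = c *: Nact b n + Nact b n'.
Proof.
case: b n n' => [b1 b2] [n1 n2] [n1' n2']; rewrite /Nact /= pairZ pairD.
congr (_, _); last by rewrite actM_linr.
rewrite !actM_linr !gcastD !gcastZ !scalerDr !scalerA (mulrC c) -!scalerA.
by rewrite addrACA.
Qed.
Lemma Nact_assoc i j k (b : B i) (b' : B j) (n : N k) :
  Nact (Bmul b b') n = gcast N (addrA i j k) (Nact b (Nact b' n)).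
Proof.
case: b b' n => [b1 b2] [b1' b2'] [n1 n2]; rewrite /Nact /Bmul gcastNm /=.
congr (_, _); last by rewrite actM_assoc.
gnorm4. rewrite !actM_assoc; gnorm4. rewrite !gcastE sgnD -scalerA.
rewrite scalerDr; symmetry; exact: addrA.
Qed.
Lemma Nact_one j (n : N j) : gcast N (add0r j) (Nact (Bone A) n) = n.
Proof.
case: n => [n1 n2]; rewrite /Nact /Bone gcastNm /=.
congr (_, _); last by rewrite actM_one.
gnorm4. rewrite /sgn expr0 scale1r. apply: etrans (add0r _) _.
by rewrite -{2}(actM_one n1) !gcastE.
Qed.
End NN.

Section L.
Variables (R : comRingType) (V : lmodType R).
Lemma L2 (t s : R) (a b c d : V) :
  t *: (a + s *: b) + (c + s *: d) = t *: a + c + s *: (t *: b + d).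
Proof.
rewrite !scalerDr !scalerA mulrC -!addrA; congr (_ + _); rewrite addrCA; congr (_ + _).
Qed.
Lemma L1 (s t : R) (A B C D E F : V) : s * s = 1 ->
  - (A - s *: B + s *: (C + s *: D)) + E =
  - A - s *: (t *: F + C) + s *: (t *: F + B + s *: (- D + E)).
Proof.
move=> ss; rewrite !scalerDr !scalerA ss !scale1r ?scalerN ?scaleNr.
rewrite !opprD !opprK -!addrA; congr (_ + _).
by rewrite [in RHS]addrCA addKr addrCA.
Qed.
End L.
Section L2.
Variables (R : comRingType) (V : lmodType R).
Lemma L3 (c : R) (a b d e : V) : - (c *: a + b) + (c *: d + e) = c *: (- a + d) + (- b + e).
Proof. by rewrite opprD addrACA scalerDr scalerN. Qed.
Lemma L4 (c t : R) (x y a b : V) : t *: (c *: x + y) + (c *: a + b) = c *: (t *: x + a) + (t *: y + b).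
Proof. by rewrite scalerDr addrACA scalerDr !scalerA mulrC. Qed.
End L2.

Section DD.
Variables (R : comRingType) (A : cdga R) (X : int -> Type).
Local Notation M := (Mmod A X).
Local Notation N := (Nmod A X).
Local Notation B := (Bmod A).

Lemma lin_gcast (h : int -> int) (L : forall i, {linear M i -> M (h i)}) i j (e : i = j) x :
  L j (gcast M e x) = gcast M (congr1 h e) (L i x).
Proof. by case: j / e. Qed.


Variables (t : R)
  (xi : forall i, {linear M i -> M (i - 1)})
  (tau : forall i, {linear M i -> M i})
  (delta : forall i, {linear M i -> M (i - 1 - 1)})
  (alpha : forall i, {linear M i -> M (i - 1)}).

Definition aa i (x : M i) : M (i - 1) := alpha i x.
Definition dd i (x : M i) : M (i - 1 - 1) := delta i x.
Definition xx i (x : M i) : M (i - 1) := xi i x.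
Definition tt i (x : M i) : M i := tau i x.
Arguments aa : clear implicits. Arguments dd : clear implicits.
Arguments xx : clear implicits. Arguments tt : clear implicits.
Lemma NdE0 i (n : N i) : Nd xi tau delta alpha n = (xx (i - 1) n.1 + dd i n.2, tt (i - 1) n.1 + aa i n.2).
Proof. by []. Qed.
Lemma xxD i x y : xx i (x + y) = xx i x + xx i y. Proof. exact: raddfD. Qed.
Lemma xxZ i c x : xx i (c *: x) = c *: xx i x. Proof. exact: linearZZ. Qed.
Lemma xxN i x : xx i (- x) = - xx i x. Proof. exact: raddfN. Qed.
Lemma xx0 i : xx i 0 = 0. Proof. exact: raddf0. Qed.
Lemma ttD i x y : tt i (x + y) = tt i x + tt i y. Proof. exact: raddfD. Qed.
Lemma ttZ i c x : tt i (c *: x) = c *: tt i x. Proof. exact: linearZZ. Qed.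
Lemma ttN i x : tt i (- x) = - tt i x. Proof. exact: raddfN. Qed.
Lemma tt0 i : tt i 0 = 0. Proof. exact: raddf0. Qed.
Lemma xx_gcast i j (e : i = j) x : xx j (gcast M e x) = gcast M (congr1 (fun z => z - 1) e) (xx i x).
Proof. by case: j / e. Qed.
Lemma tt_gcast i j (e : i = j) x : tt j (gcast M e x) = gcast M e (tt i x).
Proof. by case: j / e. Qed.
Lemma aaD i x y : aa i (x + y) = aa i x + aa i y. Proof. exact: raddfD. Qed.
Lemma aaZ i c x : aa i (c *: x) = c *: aa i x. Proof. exact: linearZZ. Qed.
Lemma aaN i x : aa i (- x) = - aa i x. Proof. exact: raddfN. Qed.
Lemma aa0 i : aa i 0 = 0. Proof. exact: raddf0. Qed.
Lemma ddD i x y : dd i (x + y) = dd i x + dd i y. Proof. exact: raddfD. Qed.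
Lemma ddZ i c x : dd i (c *: x) = c *: dd i x. Proof. exact: linearZZ. Qed.
Lemma ddN i x : dd i (- x) = - dd i x. Proof. exact: raddfN. Qed.
Lemma dd0 i : dd i 0 = 0. Proof. exact: raddf0. Qed.
Lemma aa_gcast i j (e : i = j) x : aa j (gcast M e x) = gcast M (congr1 (fun z => z - 1) e) (aa i x).
Proof. by case: j / e. Qed.
Lemma dd_gcast i j (e : i = j) x : dd j (gcast M e x) = gcast M (congr1 (fun z => z - 1 - 1) e) (dd i x).
Proof. by case: j / e. Qed.

Ltac gnorm := rewrite ?(gcastD, gcastZ, gcastN, gcast0, actM_gcastl, actM_gcastr,
   actMDl, actMDr, actMZl, actMZr, actMNl, actMNr, actM0l, actM0r, gcast_comp,
   aaD, aaZ, aaN, aa0, ddD, ddZ, ddN, dd0, aa_gcast, dd_gcast).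

Section III.
Hypotheses
  (H1 : forall i (m : M i), xi i m = - alpha i m)
  (H2 : forall i (m : M i), tau i m = t *: m)
  (H3 : forall i (m : M i), aa (i - 1) (aa i m) = - (t *: dd i m))
  (H4 : forall k (n : M k), dd (k - 1) (aa k n) = aa (k - 1 - 1) (dd k n))
  (H5 : forall i j (a : A i) (m : M j),
          dd (i + j) (actM a m) = gcast M (eq_dd i j) (actM a (dd j m)))
  (H6 : forall i j (a : A i) (m : M j),
          aa (i + j) (actM a m)
          = gcast M (eq_dl i j) (actM (dga_d a) m)
            + sgn R i *: gcast M (eq_dr i j) (actM a (aa j m))).

Lemma NdE i (n : N i) : Nd xi tau delta alpha n = (- aa (i - 1) n.1 + dd i n.2, t *: n.1 + aa i n.2).
Proof. by rewrite /Nd H1 H2. Qed.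

Lemma leib i j (b : B i) (n : N j) :
  Nd xi tau delta alpha (Nact b n) =
  gcast N (eq_dl i j) (Nact (Bd t b) n) + sgn R i *: gcast N (eq_dr i j) (Nact b (Nd xi tau delta alpha n)).
Proof.
case: b n => [b1 b2] [n1 n2]; rewrite !NdE /Nact /Bd !gcastNm /= pairZ pairD.
congr (_, _).
- gnorm; rewrite !H5 [aa _ (actM _ _)]H6 [aa _ (actM _ _)]H6; gnorm; rewrite !gcastE.
  rewrite ?sgn_sub1 ?scalerN ?scaleNr ?opprK.
  exact: L1 (sgn_sq _ _).
- gnorm; rewrite [aa _ (actM _ _)]H6; gnorm; rewrite !gcastE.
  exact: L2.
Qed.

Lemma ddN0 i (n : N i) : Nd xi tau delta alpha (Nd xi tau delta alpha n) = 0.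
Proof.
case: n => [n1 n2]; rewrite !NdE /= pair0; gnorm; rewrite !H3 H4.
congr (_, _); first by rewrite opprK addNr.
by rewrite scalerDr scalerN addrACA addNr subrr addr0.
Qed.

Lemma dg_of : is_dg_module (@Bmul R A) (Bone A) (@Bd R A t) (@Nact R A X) (Nd xi tau delta alpha).
Proof.
split; [|split; [|split; [|split; [|split; [|split]]]]].
- move=> i c [x1 x2] [y1 y2]; rewrite !NdE pairZ pairD /= pairZ pairD.
  congr (_, _); gnorm; [exact: L3 | exact: L4].
- exact: Nact_linl.
- exact: Nact_linr.
- exact: Nact_assoc.
- exact: Nact_one.
- exact: ddN0.
- exact: leib.
Qed.
End III.

Section II.
Hypothesis (Hdg : is_dg_module (@Bmul R A) (Bone A) (@Bd R A t) (@Nact R A X) (Nd xi tau delta alpha)).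

Ltac gnorm2 := rewrite ?(gcastD, gcastZ, gcastN, gcast0, actM_gcastl, actM_gcastr,
   actMDl, actMDr, actMZl, actMZr, actMNl, actMNr, actM0l, actM0r, gcast_comp,
   dga_d_gcast, dga_d_one, dga_d0, actM_one',
   xxD, xxZ, xxN, xx0, ttD, ttZ, ttN, tt0, xx_gcast, tt_gcast,
   aaD, aaZ, aaN, aa0, ddD, ddZ, ddN, dd0, aa_gcast, dd_gcast).

Lemma E1 j (m : M j) : xi j m = - alpha j m /\ tau j m = t *: m.
Proof.
case: Hdg => _ [_ [_ [_ [_ [_ Hl]]]]].
have := Hl 1 j (gcast A (esym (subrr 1)) (dga_one A), 0) (0, m).
rewrite !NdE0 /Nact /Bd /= !gcastNm pairZ pairD => H.
have /= H1 := congr1 fst H; have /= H2 := congr1 snd H; clear H.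
move: H1 H2; gnorm2; rewrite !gcastE /sgn expr1 expr0 => H1 H2.
move: H1 H2; rewrite ?scaler0 ?addr0 ?add0r ?oppr0 ?scaleN1r ?subr0 ?sub0r => H1 H2.
split.
- by apply: (tr_inj (k := 1 + j - 1 - 1)); [lia | rewrite trN].
- by apply: (tr_inj (k := 1 + j - 1)); [lia | rewrite trZ].
Qed.

Lemma E2 i (m : M i) : (aa (i - 1) (aa i m) = - (t *: dd i m)) /\ (dd (i - 1) (aa i m) = aa (i - 1 - 1) (dd i m)).
Proof.
have H1 k (x : M k) := proj1 (E1 x); have H2 k (x : M k) := proj2 (E1 x).
case: Hdg => _ [_ [_ [_ [_ [Hd _]]]]].
have := Hd i (0, m); rewrite !(NdE H1 H2) /= pair0 => H.
have /= K1 := congr1 fst H; have /= K2 := congr1 snd H; clear H.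
move: K1 K2; gnorm2; rewrite ?oppr0 ?scaler0 ?add0r ?addr0 ?sub0r ?subr0 ?opprK.
move=> /eqP; rewrite (addrC (- aa _ _)) subr_eq0 => /eqP K1 /eqP.
rewrite (addrC (t *: _)) addr_eq0 => /eqP K2.
by split.
Qed.

Lemma E3 i j (a : A i) (m : M j) :
  (dd (i + j) (actM a m) = gcast M (eq_dd i j) (actM a (dd j m))) /\
  (aa (i + j) (actM a m) = gcast M (eq_dl i j) (actM (dga_d a) m)
            + sgn R i *: gcast M (eq_dr i j) (actM a (aa j m))).
Proof.
case: Hdg => _ [_ [_ [_ [_ [_ Hl]]]]].
have := Hl i j (0, a) (0, m).
rewrite !NdE0 /Nact /Bd /= !gcastNm pairZ pairD => H.
have /= H1 := congr1 fst H; have /= H2 := congr1 snd H; clear H.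
move: H1 H2; gnorm2; rewrite ?oppr0 ?scaler0 ?add0r ?addr0 ?sub0r ?subr0 ?opprK.
rewrite scalerA sgn_sq scale1r => K1 K2.
split; last by [].
by rewrite K1 !gcastE.
Qed.
End II.
End DD.

Section Basis.
Variables (R : comRingType) (A : cdga R) (X : int -> Type) (t : R).
Local Notation M := (Mmod A X).
Local Notation N := (Nmod A X).
Local Notation B := (Bmod A).
Local Notation P := {l : int & X l}.

Lemma mulr1_dga k (a : A k) : dga_mul a (dga_one A) = gcast A (esym (addr0 k)) a.
Proof.
rewrite dga_mulC /sgn mulr0 /= expr0 scale1r.
apply/esym; rewrite -{1}(dga_mul1 a) gcast_comp.
by rewrite !gcastE.
Qed.

Definition uvf l (x : X l) : dprod (fun p : P => A (l - tag p)) := fun p =>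
  match pselect (p = existT X l x) with
  | left h => gcast A (esym (etrans (congr1 (fun z => l - z) (congr1 (@tag _ X) h)) (subrr l))) (dga_one A)
  | right _ => 0
  end.
Lemma uvf_supp l (x : X l) : finsupp (uvf x).
Proof.
apply/asboolP; exists [:: existT X l x] => p; rewrite /uvf.
case: pselect => [h _|_]; [by left | by rewrite eqxx].
Qed.
Definition uv l (x : X l) : M l := DSum (uvf_supp x).

Lemma actM_uv k l (x : X l) (a : A k) q :
  dcomp (actM a (uv x)) q = if `[< q = existT X l x >] then tr (k + l - tag q) a else 0.
Proof.
rewrite dcomp_actM /dcomp /= /uvf; case: pselect => h.
- rewrite (asboolT h); subst q => /=.
  by rewrite mul_gcastr mulr1_dga !gcast_comp gcastE.
- by rewrite (asboolF h) dga_mulr0 gcast0.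
Qed.

Definition eb l (x : X l) : N l := (0, uv x).
Definition Tm k (c : forall p : P, B (k - tag p)) (p : P) : N k :=
  gcast N (eq_subK k (tag p)) (Nact (c p) (eb (tagged p))).

Lemma Tm1 k c (p q : P) : dcomp (@Tm k c p).1 q = if `[< q = p >] then tr (k - 1 - tag q) (c q).1 else 0.
Proof.
case: p c => l x c; rewrite /Tm gcastNm /Nact /= dcomp_gcast dcompD dcompZ !dcomp_gcast.
rewrite actM0r dcomp0 gcast0 scaler0 addr0 actM_uv.
have [h|h] := pselect (q = existT X l x); last by rewrite !(asboolF h) !gcast0.
rewrite !(asboolT h).
subst q => /=; rewrite !gcastE.
by repeat (rewrite tr_tr; last by lia).
Qed.
Lemma Tm2 k c (p q : P) : dcomp (@Tm k c p).2 q = if `[< q = p >] then tr (k - tag q) (c q).2 else 0.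
Proof.
case: p c => l x c; rewrite /Tm gcastNm /Nact /= dcomp_gcast actM_uv.
have [h|h] := pselect (q = existT X l x); last by rewrite !(asboolF h) gcast0.
rewrite !(asboolT h).
subst q => /=; rewrite !gcastE.
by repeat (rewrite tr_tr; last by lia).
Qed.

Lemma sum_ind (V : zmodType) (s : seq P) (q : P) (g : V) : List.NoDup s ->
  \sum_(p <- s) (if `[< q = p >] then g else 0) = if `[< List.In q s >] then g else 0.
Proof.
elim: s => [|p s IH] nd; first by rewrite big_nil asboolF.
move: nd => /List.NoDup_cons_iff [nps nds]; rewrite big_cons IH //.
case: (asboolP (q = p)) => [e|ne].
- subst q; rewrite (asboolF nps) (asboolT (or_introl erefl)) addr0 //.
- case: (asboolP (List.In q s)) => [h|h].
  + by rewrite add0r asboolT //; right.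
  + by rewrite add0r asboolF // => -[e|//]; apply: ne.
Qed.

Lemma sumfst k (s : seq P) (F : P -> N k) : (\sum_(p <- s) F p).1 = \sum_(p <- s) (F p).1.
Proof. by apply: (big_morph fst) => //. Qed.
Lemma sumsnd k (s : seq P) (F : P -> N k) : (\sum_(p <- s) F p).2 = \sum_(p <- s) (F p).2.
Proof. by apply: (big_morph snd) => //. Qed.
Lemma dcomp_sum k (s : seq P) (F : P -> M k) q : dcomp (\sum_(p <- s) F p) q = \sum_(p <- s) dcomp (F p) q.
Proof. by apply: (big_morph (fun m => dcomp m q)) => //. Qed.

Definition cn k (n : N k) (p : P) : B (k - tag p) :=
  (tr (k - tag p - 1) (dcomp n.1 p), tr (k - tag p) (dcomp n.2 p)).

Lemma span_expl k (n : N k) (s : seq P) : List.NoDup s ->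
  (forall q, ~ List.In q s -> dcomp n.1 q = 0 /\ dcomp n.2 q = 0) ->
  n = \sum_(p <- s) Tm (cn n) p.
Proof.
move=> nd H.
have -> : \sum_(p <- s) Tm (cn n) p = ((\sum_(p <- s) Tm (cn n) p).1, (\sum_(p <- s) Tm (cn n) p).2).
  by case: (\sum_(p <- s) Tm (cn n) p).
case: n H => n1 n2 H; congr (_, _); apply: M_eq => q.
- rewrite sumfst dcomp_sum; under eq_bigr => p _ do rewrite Tm1.
  rewrite sum_ind //; case: asboolP => h; last by case: (H q h).
  by rewrite /cn /= tr_tr ?tr_id //; lia.
- rewrite sumsnd dcomp_sum; under eq_bigr => p _ do rewrite Tm2.
  rewrite sum_ind //; case: asboolP => h; last by case: (H q h).
  by rewrite /cn /= !tr_id.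
Qed.

Lemma indep k (s : seq P) (c : forall p : P, B (k - tag p)) : List.NoDup s ->
  \sum_(p <- s) Tm c p = 0 -> forall p, List.In p s -> c p = 0.
Proof.
move=> nd H p ps.
have H1 := congr1 (fun z => dcomp z.1 p) H; have H2 := congr1 (fun z => dcomp z.2 p) H.
move: H1 => /=; rewrite sumfst dcomp_sum.
under eq_bigr => p' _ do rewrite Tm1.
rewrite sum_ind // (asboolT ps) => H1.
move: H2 => /=; rewrite sumsnd dcomp_sum.
under eq_bigr => p' _ do rewrite Tm2.
rewrite sum_ind // (asboolT ps) => H2.
have E1 : (c p).1 = 0 by apply: (tr_inj (k := k - 1 - tag p)); [lia | rewrite H1 tr0].
have E2 : (c p).2 = 0 by apply: (tr_inj (k := k - tag p)); [lia | rewrite H2 tr0].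
by rewrite [c p]surjective_pairing E1 E2.
Qed.

Lemma nodup_filter (s0 : seq P) (Q : P -> Prop) :
  exists s, List.NoDup s /\ forall q, List.In q s <-> (List.In q s0 /\ Q q).
Proof.
elim: s0 => [|a s0 [s [nd H]]]; first by exists [::]; split; [constructor|by move=> q; split => -[]].
have [Ha|Ha] := pselect (Q a /\ ~ List.In a s).
- exists (a :: s); split; first by constructor; case: Ha.
  move=> q; split.
  + by case=> [<-|/H [h1 h2]]; [split; [left|case: Ha] | split; [right|]].
  + by case=> -[<-|h1] h2; [left | right; apply/H].
- exists s; split => // q; split; first by move/H => [h1 h2]; split; [right|].
  case=> -[e|h1] h2; last by apply/H.
  subst q; have [//|nin] := pselect (List.In a s); case: Ha; split => //.
Qed.

Lemma nz_deg K (a : A K) : a != 0 -> 0 <= K.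
Proof.
move=> nz; have [//|lt] := boolP (0 <= K).
have lt' : K < 0 by lia.
by rewrite (dga_pos lt' a) eqxx in nz.
Qed.

Lemma gen_span k (n : N k) : exists s, List.NoDup s /\
  (forall p, List.In p s -> dcomp n.1 p != 0 \/ dcomp n.2 p != 0) /\
  n = \sum_(p <- s) Tm (cn n) p.
Proof.
have [s1 H1] : exists s1, forall q, dcomp n.1 q != 0 -> List.In q s1 by move: (dsum_valP n.1) => /asboolP [s1 H1]; exists s1.
have [s2 H2] : exists s2, forall q, dcomp n.2 q != 0 -> List.In q s2 by move: (dsum_valP n.2) => /asboolP [s2 H2]; exists s2.
have [s [nd Hs]] := nodup_filter (s1 ++ s2) (fun q => dcomp n.1 q != 0 \/ dcomp n.2 q != 0).
exists s; split => //; split; first by move=> p /Hs [].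
apply: span_expl => // q nin; split.
- case: (eqVneq (dcomp n.1 q) 0) => // nz; exfalso; apply: nin; apply/Hs; split; last by left.
  by apply: List.in_or_app; left; apply: H1.
- case: (eqVneq (dcomp n.2 q) 0) => // nz; exfalso; apply: nin; apply/Hs; split; last by right.
  by apply: List.in_or_app; right; apply: H2.
Qed.

Lemma semifree (i0 : int) (Hi0 : forall l, l < i0 -> X l -> False)
  (dN : forall i, N i -> N (i - 1)) :
  is_dg_module (@Bmul R A) (Bone A) (@Bd R A t) (@Nact R A X) dN ->
  is_semifree_dg_module (@Bmul R A) (Bone A) (@Bd R A t) (@Nact R A X) dN.
Proof.
move=> dg; split => //.
exists X, (fun l x => eb x), (fun l _ => absz (l - i0)); split; first split.
- move=> k n; have [s [_ [_ ->]]] := gen_span n.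
  by exists s, (cn n); split.
- move=> k s c nd H p ps; exact: indep nd H p ps.
- move=> i x; have [s [_ [Hs E]]] := gen_span (dN i (eb x)).
  exists s, (cn (dN i (eb x))); split => // p ps.
  have lti : tag p < i.
    case: (Hs p ps) => /nz_deg; lia.
  have gi : i0 <= tag p.
    have [//|h] := boolP (i0 <= tag p); have h' : tag p < i0 by lia.
    by case: (Hi0 _ h' (tagged p)).
  have gi' : i0 <= i.
    have [//|h] := boolP (i0 <= i); have h' : i < i0 by lia.
    by case: (Hi0 _ h' x).
  lia.
Qed.
End Basis.

Lemma basis_ind (R : pzRingType) (V : lmodType R) n (g : 'I_n -> V) (Q : V -> Prop) :
  is_basis g -> Q 0 -> (forall x y, Q x -> Q y -> Q (x + y)) ->
  (forall c x, Q x -> Q (c *: x)) -> (forall s, Q (g s)) -> forall v, Q v.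
Proof.
move=> [sp _] Q0 QD QZ Qg v; case: (sp v) => c ->.
by apply: (big_ind Q) => // s _; apply: QZ.
Qed.

Unset Implicit Arguments.
Theorem lemma2p6 (R : comRingType) (A : cdga R)
  (r : int -> nat) (gam : forall i, 'I_(r i) -> A i) (t : R) (X : int -> Type)
  (xi : forall i, {linear Mmod A X i -> Mmod A X (i - 1)})
  (tau : forall i, {linear Mmod A X i -> Mmod A X i})
  (delta : forall i, {linear Mmod A X i -> Mmod A X (i - 1 - 1)})
  (alpha : forall i, {linear Mmod A X i -> Mmod A X (i - 1)}) :
  noetherian R ->
  (forall i, is_basis (gam i)) ->
  (exists i0 : int, forall l, l < i0 -> X l -> False) ->
  let N_is_dg := is_dg_module (@Bmul R A) (Bone A) (@Bd R A t) (@Nact R A X)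
                   (Nd xi tau delta alpha) in
  [<-> (* (i) *) is_semifree_dg_module (@Bmul R A) (Bone A) (@Bd R A t) (@Nact R A X)
                   (Nd xi tau delta alpha);
       (* (ii) *) N_is_dg;
       (* (iii) *)
       (forall i (m : Mmod A X i), xi i m = - alpha i m) /\
       (forall i (m : Mmod A X i), tau i m = t *: m) /\
       (forall i (m : Mmod A X i), alpha (i - 1) (alpha i m) = - (t *: delta i m)) /\
       (forall i (m : Mmod A X (i + 1)),
          delta i (gcast (Mmod A X) (eq_addK1 i) (alpha (i + 1) m))
          = alpha (i - 1) (gcast (Mmod A X) (eq_addK1' i) (delta (i + 1) m))) /\
       (forall i j (s : 'I_(r i)) (m : Mmod A X j),
          delta (i + j) (actM (gam i s) m)
          = gcast (Mmod A X) (eq_dd i j) (actM (gam i s) (delta j m))) /\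
       (forall i j (s : 'I_(r i)) (m : Mmod A X j),
          alpha (i + j) (actM (gam i s) m)
          = gcast (Mmod A X) (eq_dl i j) (actM (dga_d (gam i s)) m)
            + sgn R i *: gcast (Mmod A X) (eq_dr i j) (actM (gam i s) (alpha j m)))]
  /\ (N_is_dg -> forall i (n : Nmod A X i),
        Nd xi tau delta alpha n = (- alpha (i - 1) n.1 + delta i n.2, t *: n.1 + alpha i n.2)).
Proof.
move=> _ gb [i0 Hi0] Ndg; rewrite /Ndg.
set III := (_ /\ _ /\ _ /\ _ /\ _ /\ _).
have II_III : is_dg_module (@Bmul R A) (Bone A) (@Bd R A t) (@Nact R A X) (Nd xi tau delta alpha) -> III.
  move=> dg; split; [|split; [|split; [|split; [|split]]]].
  - by move=> i m; case: (E1 dg m).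
  - by move=> i m; case: (E1 dg m).
  - by move=> i m; case: (E2 dg m).
  - move=> i m; rewrite (lin_gcast delta) (lin_gcast alpha).
    have := proj2 (E2 dg m); rewrite /dd /aa => ->.
    by rewrite !gcastE.
  - by move=> i j s m; case: (E3 dg (gam i s) m).
  - by move=> i j s m; case: (E3 dg (gam i s) m).
have III_II : III -> is_dg_module (@Bmul R A) (Bone A) (@Bd R A t) (@Nact R A X) (Nd xi tau delta alpha).
  case=> H1 [H2 [H3 [H4 [H5 H6]]]].
  apply: (dg_of H1 H2 H3).
  - move=> k n; have := H4 (k - 1) (gcast (Mmod A X) (esym (subrK 1 k)) n).
    rewrite !(lin_gcast delta, lin_gcast alpha).
    by rewrite !gcast_comp !gcast_id.
  - move=> i j a m; move: a m; apply: (basis_ind (gb i)).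
    + by move=> m; rewrite !actM0l dd0 gcast0.
    + by move=> x y Hx Hy m; rewrite !actMDl ddD Hx Hy gcastD.
    + by move=> c x Hx m; rewrite !actMZl ddZ Hx gcastZ.
    + by move=> s m; apply: H5.
  - move=> i j a m; move: a m; apply: (basis_ind (gb i)).
    + by move=> m; rewrite !actM0l aa0 dga_d0 actM0l !gcast0 scaler0 addr0.
    + move=> x y Hx Hy m; rewrite !actMDl aaD Hx Hy dga_dD actMDl !gcastD scalerDr.
      exact: addrACA.
    + move=> c x Hx m; rewrite !actMZl aaZ Hx dga_dZ actMZl !gcastZ scalerDr !scalerA.
      by rewrite (mulrC c).
    + by move=> s m; apply: H6.
split.
- tfae.
  + by case.
  + exact: II_III.
  + move=> h; apply: (@semifree _ _ _ t i0 Hi0); exact: III_II.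
- move=> dg i n; rewrite /Nd.
  by rewrite (proj1 (E1 dg n.1)) (proj2 (E1 dg n.1)).
Qed.
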